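(* Let $R$ be a semiprimary ring. Then $R$ is rigid if and only if the dual $\mathring{\mathbf{I}}^{\mathscr{J}}$ of the Jacobson system of $R$ equals the Jacobson system of $R^{\mathrm{op}}$.
   Context: A ring $R$ is semiprimary if its Jacobson radical $\mathscr{J}$ is nilpotent and $R/\mathscr{J}$ is semisimple; its Loewy length $d$ is the nilpotency index of $\mathscr{J}$ (same for $R^{\mathrm{op}}$, whose Jacobson radical is $\mathscr{J}$), and $\mathscr{J}^0=R$. The Jacobson system of $R$ is $I^{\mathscr{J}}_{ij}:=\{x\in R\mid x\mathscr{J}^{d+1-j}\subset\mathscr{J}^{d+1-i}\}$ for $1\le i,j\le d+1$; the Jacobson system of $R^{\mathrm{op}}$ is defined in the same way using the multiplication of $R^{\mathrm{op}}$, i.e. $\{x\in R\mid \mathscr{J}^{d+1-j}x\subset\mathscr{J}^{d+1-i}\}$. For a $d$-system $\mathbf{I}$ of ideals in $R$, its dual is the system of ideals in $R^{\mathrm{op}}$ given by $\mathring{I}_{ij}:=I_{d+2-j,d+2-i}$. A finite-length module is rigid if it has exactly one Loewy filtration (a semisimple filtration of minimal length); $R$ is rigid if both ${}_RR$ and $R_R$ are rigid. *)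

(* Defs.v *)
From HB Require Import structures.
From mathcomp Require Import all_boot all_order all_algebra.
Set Implicit Arguments. Unset Strict Implicit. Unset Printing Implicit Defensive.
Import GRing.Theory.
Local Open Scope ring_scope.

Definition left_ideal (R : pzRingType) (L : R -> Prop) : Prop :=
  [/\ L 0, (forall x y, L x -> L y -> L (x - y)) & (forall r x, L x -> L (r * x))].

Definition maximal_left_ideal (R : pzRingType) (L : R -> Prop) : Prop :=
  [/\ left_ideal L, ~ L 1 &
      forall L' : R -> Prop, left_ideal L' -> (forall x, L x -> L' x) ->
        (forall x, L' x <-> L x) \/ (forall x, L' x)].

Definition jac (R : pzRingType) (x : R) : Prop :=
  forall L : R -> Prop, maximal_left_ideal L -> L x.

Fixpoint jpow (R : pzRingType) (k : nat) (x : R) : Prop :=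
  match k with
  | 0%N => True
  | k'.+1 => exists (m : nat) (a b : 'I_m -> R),
      [/\ forall i, jac (a i), forall i, jpow k' (b i) &
          x = \sum_(i < m) a i * b i]
  end.

(* Semisimple filtration of the left regular module: submodules are left
   ideals; M 0 = 0, M n = R, increasing, and each factor M (i+1) / M i is
   semisimple, i.e. every submodule between M i and M (i+1) has a
   complement (modulo M i). *)
Definition semisimple_factor (R : pzRingType) (A B : R -> Prop) : Prop :=
  forall N : R -> Prop, left_ideal N ->
    (forall x, A x -> N x) -> (forall x, N x -> B x) ->
    exists N' : R -> Prop,
      [/\ left_ideal N', (forall x, A x -> N' x), (forall x, N' x -> B x),
          (forall x, B x -> exists a b, [/\ N a, N' b & x = a + b]) &
          (forall x, N x -> N' x -> A x)].

Definition semisimple_filtration (R : pzRingType) (n : nat) (M : nat -> R -> Prop)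
  : Prop :=
  [/\ (forall i, (i <= n)%N -> left_ideal (M i)),
      (forall x, M 0%N x <-> x = 0),
      (forall x, M n x),
      (forall i x, (i < n)%N -> M i x -> M i.+1 x) &
      (forall i, (i < n)%N -> semisimple_factor (M i) (M i.+1))].

Definition loewy_filtration (R : pzRingType) (n : nat) (M : nat -> R -> Prop)
  : Prop :=
  semisimple_filtration n M /\
  forall m (M' : nat -> R -> Prop), semisimple_filtration m M' -> (n <= m)%N.

Definition left_rigid (R : pzRingType) : Prop :=
  (exists n M, @loewy_filtration R n M) /\
  forall n M n' M', @loewy_filtration R n M -> @loewy_filtration R n' M' ->
    n = n' /\ forall i, (i <= n)%N -> forall x, M i x <-> M' i x.

(* R rigid: both _R R and R_R (= left regular module of R^op) rigid. *)
Definition rigid_ring (R : pzRingType) : Prop := left_rigid R /\ left_rigid R^c.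

Definition semisimple_ring_mod_jac (R : pzRingType) : Prop :=
  forall L : R -> Prop, left_ideal L -> (forall x, jac x -> L x) ->
    exists L' : R -> Prop,
      [/\ left_ideal L', (forall x, jac x -> L' x),
          (forall x, exists a b, [/\ L a, L' b & x = a + b]) &
          (forall x, L x -> L' x -> jac x)].

Definition semiprimary (R : pzRingType) : Prop :=
  (exists n, forall x : R, jpow n x -> x = 0) /\ semisimple_ring_mod_jac R.

(* d is the Loewy length: nilpotency index of J. *)
Definition loewy_length (R : pzRingType) (d : nat) : Prop :=
  (forall x : R, jpow d x -> x = 0) /\
  forall k, (forall x : R, jpow k x -> x = 0) -> (d <= k)%N.

Definition jsys (R : pzRingType) (d i j : nat) (x : R) : Prop :=
  forall y, jpow (d.+1 - j) y -> jpow (d.+1 - i) (x * y).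

Definition jsys_op (R : pzRingType) (d i j : nat) (x : R) : Prop :=
  forall y, jpow (d.+1 - j) y -> jpow (d.+1 - i) (y * x).

Definition dual_sys (R : pzRingType) (d : nat) (I : nat -> nat -> R -> Prop)
  (i j : nat) : R -> Prop := I (d.+2 - j)%N (d.+2 - i)%N.

(* Main.v *)
Require Import Defs.
From HB Require Import structures.
From mathcomp Require Import all_boot all_order all_algebra.
From mathcomp Require Import boolp classical_sets zify.
Set Implicit Arguments. Unset Strict Implicit. Unset Printing Implicit Defensive.
Import GRing.Theory.
Local Open Scope ring_scope.
Section Gen.
Variable S : pzRingType.
Implicit Types (L A B N : S -> Prop) (x y r : S).

Lemma li0 L : left_ideal L -> L 0.
Proof. by case. Qed.
Lemma liB L x y : left_ideal L -> L x -> L y -> L (x - y).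
Proof. by case=> _ h _; apply: h. Qed.
Lemma liM L r x : left_ideal L -> L x -> L (r * x).
Proof. by case=> _ _ h; apply: h. Qed.
Lemma liN L x : left_ideal L -> L x -> L (- x).
Proof. by move=> hL hx; rewrite -sub0r; apply: liB => //; apply: li0. Qed.
Lemma liD L x y : left_ideal L -> L x -> L y -> L (x + y).
Proof. by move=> hL hx hy; rewrite -[y]opprK; apply: liB => //; apply: liN. Qed.
Lemma li_sum L m (f : 'I_m -> S) : left_ideal L -> (forall i, L (f i)) -> L (\sum_i f i).
Proof.
move=> hL hf; apply: (big_ind L); [exact: li0 | move=> ? ?; exact: liD | by []].
Qed.
Lemma liT : left_ideal (fun _ : S => True).
Proof. by split. Qed.

Lemma ssf_kill A B j : left_ideal A -> left_ideal B -> (forall x, A x -> B x) ->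
  semisimple_factor A B -> (forall r, exists u, u * (1 - r * j) = 1) ->
  forall x, B x -> A (j * x).
Proof.
move=> hA hB AB hss hu x Bx.
pose N z := exists a r, A a /\ z = a + r * (j * x).
have hN : left_ideal N.
  split.
  - by exists 0, 0; rewrite mul0r addr0; split => //; apply: li0.
  - move=> y z [a [r [Aa ->]]] [b [s [Ab ->]]]; exists (a - b), (r - s); split.
      exact: liB.
    by rewrite mulrBl opprD addrACA.
  - move=> s y [a [r [Aa ->]]]; exists (s * a), (s * r); split; first exact: liM.
    by rewrite mulrDr mulrA.
have AN : forall z, A z -> N z by move=> z Az; exists z, 0; rewrite mul0r addr0.
have NB : forall z, N z -> B z.
  move=> z [a [r [Aa ->]]]; apply: liD => //; first exact: AB.
  by apply: (liM _ hB); apply: (liM _ hB).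
have [N' [hN' AN' N'B cov cap]] := hss N hN AN NB.
have [n [n' [[a0 [r [Aa0 En]]] N'n' ex]]] := cov x Bx; subst n.
have [u hu'] := hu r.
have ex2 : x = u * a0 + u * n'.
  rewrite -mulrDr -[x in LHS]mul1r -hu' -mulrA; congr (_ * _).
  by rewrite mulrBl mul1r -mulrA {1}ex addrAC addrK.
have h1 : A (j * u * a0) by apply: (liM _ hA Aa0).
have h2 : A (j * u * n').
  apply: cap.
    have -> : j * u * n' = j * x - j * u * a0 by rewrite ex2 mulrDr !mulrA addrC addKr.
    apply: liB => //; last exact: AN.
    by exists 0, 1; rewrite mul1r add0r; split => //; apply: li0.
  exact: (liM _ hN' N'n').
by rewrite ex2 mulrDr !mulrA; apply: liD.
Qed.
End Gen.
Section Gen2.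
Local Open Scope classical_set_scope.
Variable S : pzRingType.
Implicit Types (L A B N : S -> Prop) (x y r : S).

Lemma ideal_plus_principal (C : S -> Prop) e :
  left_ideal C -> left_ideal (fun z => exists c s, C c /\ z = c + s * e).
Proof.
move=> hC; split.
- by exists 0, 0; rewrite mul0r addr0; split => //; apply: li0.
- move=> y z [a [r [Aa ->]]] [b [s [Ab ->]]]; exists (a - b), (r - s); split.
    exact: liB.
  by rewrite mulrBl opprD addrACA.
- move=> s y [a [r [Aa ->]]]; exists (s * a), (s * r); split; first exact: liM.
  by rewrite mulrDr mulrA.
Qed.

Lemma ideal_sum2 (C D : S -> Prop) :
  left_ideal C -> left_ideal D -> left_ideal (fun z => exists a c, [/\ C a, D c & z = a + c]).
Proof.
move=> hC hD; split.
- by exists 0, 0; rewrite addr0; split => //; apply: li0.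
- move=> y z [a [c [Ca Dc ->]]] [b [e [Cb De ->]]]; exists (a - b), (c - e); split.
  + exact: liB. + exact: liB. + by rewrite opprD addrACA.
- move=> s y [a [c [Ca Dc ->]]]; exists (s * a), (s * c); split.
  + exact: liM. + exact: liM. + by rewrite mulrDr.
Qed.

Lemma ssf_make (Jp : S -> Prop) A B :
  (forall L, left_ideal L -> (forall x, Jp x -> L x) ->
     exists L', [/\ left_ideal L', (forall x, Jp x -> L' x),
        (forall x, exists a b, [/\ L a, L' b & x = a + b]) &
        (forall x, L x -> L' x -> Jp x)]) ->
  left_ideal A -> left_ideal B -> (forall x, A x -> B x) ->
  (forall a x, Jp a -> B x -> A (a * x)) ->
  semisimple_factor A B.
Proof.
move=> hJ hA hB AB JBA N hN AN NB.
pose good (C : S -> Prop) := [/\ left_ideal C, (forall x, A x -> C x),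
   (forall x, C x -> B x) & (forall x, N x -> C x -> A x)].
pose P := fun C : set S => C = set0 \/ good C.
have [C0 [PC0 maxC0]] : exists C0, P C0 /\ forall D, C0 `<` D -> ~ P D.
  apply: Zorn_bigcup => F FP Ftot.
  case: (pselect (exists C, F C /\ good C)) => [[C1 [FC1 gC1]]|nog]; last first.
    left; apply/seteqP; split => x // [C FC Cx].
    case: (FP C FC) => [Ceq| gC]; first by rewrite Ceq in Cx.
    by exfalso; apply: nog; exists C.
  right.
  have mem_good : forall C x, F C -> C x -> good C.
    by move=> C x FC Cx; case: (FP C FC) => // Ceq; rewrite Ceq in Cx.
  split.
  - split.
    + by exists C1 => //; case: gC1 => hC1 _ _ _; exact: li0.
    + move=> x y [Cx FCx Cxx] [Cy FCy Cyy].
      case: (Ftot _ _ FCx FCy) => sub.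
      * exists Cy => //; have [hCy _ _ _] := mem_good _ _ FCy Cyy.
        by apply: liB => //; exact: sub.
      * exists Cx => //; have [hCx _ _ _] := mem_good _ _ FCx Cxx.
        by apply: liB => //; exact: sub.
    + move=> r x [C FC Cx]; exists C => //; have [hC _ _ _] := mem_good _ _ FC Cx.
      exact: liM.
  - by move=> x Ax; exists C1 => //; case: gC1 => _ h _ _; apply: h.
  - by move=> x [C FC Cx]; have [_ _ h _] := mem_good _ _ FC Cx; exact: h.
  - by move=> x Nx [C FC Cx]; have [_ _ _ h] := mem_good _ _ FC Cx; exact: h.
have gA : good A by split => // x; apply: AB.
have gC0 : good C0.
  case: PC0 => // C0eq; exfalso; apply: (maxC0 A); last by right.
  by rewrite C0eq; split => [x []|/(_ 0 (li0 hA))[]].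
have [hC0 AC0 C0B NC0] := gC0.
exists C0; split => // b0 Bb0.
case: (pselect (exists a b, [/\ N a, C0 b & b0 = a + b])) => // nocov; exfalso.
pose K z := exists a c, [/\ N a, C0 c & z = a + c].
have hK : left_ideal K := ideal_sum2 hN hC0.
pose L r := K (r * b0).
have hL : left_ideal L.
  split.
  - by rewrite /L mul0r; apply: li0.
  - by move=> x y Lx Ly; rewrite /L mulrBl; apply: liB.
  - by move=> r x Lx; rewrite /L -mulrA; apply: liM.
have JL : forall x, Jp x -> L x.
  move=> x Jx; exists 0, (x * b0); split; first exact: li0.
  + by apply: AC0; apply: JBA.
  + by rewrite add0r.
have [L' [hL' JL' cov cap]] := hJ L hL JL.
have [l [l' [Ll L'l' E1]]] := cov 1.
pose e := l' * b0.
have nKe : ~ K e.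
  move=> Ke; apply: nocov.
  have : K b0 by rewrite -[b0]mul1r E1 mulrDl; apply: liD.
  by case=> a [c [Na Cc ->]]; exists a, c.
pose D z := exists c s, C0 c /\ z = c + s * e.
have hD : left_ideal D := ideal_plus_principal e hC0.
apply: (maxC0 D); last first.
  right; split => //.
  - by move=> x Ax; exists x, 0; rewrite mul0r addr0; split => //; apply: AC0.
  - move=> x [c [s [Cc ->]]]; apply: liD => //; first exact: C0B.
    by rewrite /e; apply: (liM _ hB); apply: (liM _ hB).
  - move=> x Nx [c [s [Cc Ex]]].
    have Kse : K (s * e).
      exists x, (- c); split => //; first exact: liN.
      by rewrite Ex addrAC subrr add0r.
    have Jsl : Jp (s * l') by apply: cap; [rewrite /L -mulrA | apply: liM].
    have Ase : A (s * e) by rewrite /e mulrA; apply: JBA.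
    have Ac : A c.
      apply: NC0 => //; have -> : c = x - s * e by rewrite Ex addrK.
      by apply: liB => //; apply: AN.
    by rewrite Ex; apply: liD.
split; first by move=> x C0x; exists x, 0; rewrite mul0r addr0.
move=> /(_ e) h; apply: nKe; exists 0, e; split; first exact: li0.
- by apply: h; exists 0, 1; rewrite mul1r add0r; split => //; apply: li0.
- by rewrite add0r.
Qed.
End Gen2.
Lemma cat_sum (R : pzRingType) m1 m2 (a b : 'I_m1 -> R) (c e : 'I_m2 -> R) :
  exists (f g : 'I_(m1 + m2) -> R),
    (forall i, (exists t, f i = a t /\ g i = b t) \/ (exists t, f i = c t /\ g i = e t)) /\
    \sum_i f i * g i = \sum_i a i * b i + \sum_i c i * e i.
Proof.
exists (fun i => match split i with inl t => a t | inr t => c t end).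
exists (fun i => match split i with inl t => b t | inr t => e t end).
split.
  by move=> i; case: (split i) => t; [left|right]; exists t.
rewrite big_split_ord /=; congr (_ + _); apply: eq_bigr => i _.
  by rewrite (unsplitK (inl i)).
by rewrite (unsplitK (inr i)).
Qed.

Lemma nil_unit (R : pzRingType) (z : R) n : z ^+ n = 0 ->
  (exists u, u * (1 - z) = 1) /\ (exists u, (1 - z) * u = 1).
Proof.
move=> zn; set s := \sum_(i < n) z ^+ i.
have h : (1 - z) * s = 1.
  by rewrite -opprB mulNr -subrX1 zn sub0r opprK.
have cs : s * z = z * s.
  rewrite /s mulr_suml mulr_sumr; apply: eq_bigr => i _; by rewrite -exprSr -exprS.
split; exists s => //.
by rewrite mulrBr mulr1 cs -[X in X - _]mul1r -mulrBl.
Qed.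

Section Ring.
Variable R : pzRingType.
Implicit Types (x y z r a b : R).
Local Notation J := (@jac R).
Local Notation P := (@jpow R).

Lemma jac_li : left_ideal J.
Proof.
split.
- by move=> L [[]].
- by move=> x y Jx Jy L hL; apply: liB; [case: hL | apply: Jx | apply: Jy].
- by move=> r x Jx L hL; apply: liM; [case: hL | apply: Jx].
Qed.

Lemma jac_right x r : J x -> J (x * r).
Proof.
move=> Jx L hL; have [hLi nL1 maxL] := hL.
case: (pselect (L r)) => Lr; first exact: liM.
pose L' y := L (y * r).
have hL' : left_ideal L'.
  split.
  - by rewrite /L' mul0r; apply: li0.
  - by move=> y z Ly Lz; rewrite /L' mulrBl; apply: liB.
  - by move=> s y Ly; rewrite /L' -mulrA; apply: liM.
apply: (Jx L'); split => //; first by rewrite /L' mul1r.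
move=> L'' hL'' sub.
pose T z := exists l y, [/\ L l, L'' y & z = l + y * r].
have hT : left_ideal T.
  split.
  - by exists 0, 0; rewrite mul0r addr0; split => //; apply: li0.
  - move=> y z [a [c [La Lc ->]]] [b [e [Lb Le ->]]]; exists (a - b), (c - e); split.
    + exact: liB. + exact: liB. + by rewrite mulrBl opprD addrACA.
  - move=> s y [a [c [La Lc ->]]]; exists (s * a), (s * c); split.
    + exact: liM. + exact: liM. + by rewrite mulrDr mulrA.
have LT : forall z, L z -> T z.
  by move=> z Lz; exists z, 0; rewrite mul0r addr0; split => //; apply: li0.
case: (maxL T hT LT) => [TL|Tall].
  left => y; split => [L''y|]; last exact: sub.
  by apply/TL; exists 0, y; rewrite add0r; split => //; apply: li0.
right => z; have [l [w [Ll L''w E]]] := Tall (z * r).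
have L'zw : L' (z - w) by rewrite /L' mulrBl E addrK.
have -> : z = (z - w) + w by rewrite subrK.
by apply: liD => //; apply: sub.
Qed.

Lemma jpow_li k : left_ideal (P k).
Proof.
case: k => [|k]; first by split.
split.
- by exists 0%N, (fun _ => 0), (fun _ => 0); split => [[]//|[]//|]; rewrite big_ord0.
- move=> x y [m1 [a [b [Ja Pb ->]]]] [m2 [c [e [Jc Pe ->]]]].
  have [f [g [hfg E]]] := cat_sum a b (fun i => - c i) e.
  exists (m1 + m2)%N, f, g; split.
  + by move=> i; case: (hfg i) => [[t [-> _]]|[t [-> _]]]; [exact: Ja | exact: liN jac_li (Jc t)].
  + by move=> i; case: (hfg i) => [[t [_ ->]]|[t [_ ->]]]; [exact: Pb | exact: Pe].
  + by rewrite E -sumrN; congr (_ + _); apply: eq_bigr => i _; rewrite mulNr.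
- move=> r x [m [a [b [Ja Pb ->]]]]; exists m, (fun i => r * a i), b; split.
  + by move=> i; apply: liM jac_li (Ja i).
  + by [].
  + by rewrite mulr_sumr; apply: eq_bigr => i _; rewrite mulrA.
Qed.

Lemma jpow_right k x r : P k x -> P k (x * r).
Proof.
elim: k x => [//|k IH] x [m [a [b [Ja Pb ->]]]].
exists m, a, (fun i => b i * r); split; [exact: Ja | by move=> i; apply: IH; apply: Pb | ].
by rewrite mulr_suml; apply: eq_bigr => i _; rewrite mulrA.
Qed.

Lemma jpow_single k a b : J a -> P k b -> P k.+1 (a * b).
Proof.
move=> Ja Pb; exists 1%N, (fun _ => a), (fun _ => b); split => //.
by rewrite big_ord1.
Qed.

Lemma jpow_mul k l x y : P k x -> P l y -> P (k + l) (x * y).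
Proof.
elim: k x => [|k IH] x.
  by move=> _ Py; rewrite add0n; apply: liM (jpow_li l) Py.
move=> [m [a [b [Ja Pb ->]]]] Py; rewrite addSn.
exists m, a, (fun i => b i * y); split; [exact: Ja | by move=> i; apply: IH; [apply: Pb | exact: Py] | ].
by rewrite mulr_suml; apply: eq_bigr => i _; rewrite mulrA.
Qed.

Lemma jac_jpow1 a : J a -> P 1 a.
Proof. by move=> Ja; rewrite -[a]mulr1; apply: jpow_single. Qed.

Lemma jpow_rrec k y a : P k y -> J a -> P k.+1 (y * a).
Proof. by move=> Py Ja; rewrite -addn1; apply: jpow_mul => //; apply: jac_jpow1. Qed.

Lemma jpow_exp j n : J j -> P n (j ^+ n).
Proof.
move=> Jj; elim: n => [|n IH]; first by [].
by rewrite exprS; apply: jpow_single.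
Qed.

Lemma jpow_mono k x : P k.+1 x -> P k x.
Proof.
elim: k x => [//|k IH] x [m [a [b [Ja Pb ->]]]].
by exists m, a, b; split; [exact: Ja | move=> i; apply: IH; exact: Pb | ].
Qed.
End Ring.
Lemma zid1 (V : zmodType) (A B C D : V) : A - B - (C - D) = (A - C) - (B - D).
Proof. by rewrite !opprB !addrA (addrAC A (-B) D) (addrAC A (-C) D) (addrAC (A + D) (-B)). Qed.

Section RightSS.
Variable R : pzRingType.
Implicit Types (x y z r a b : R).
Local Notation J := (@jac R).

Lemma eJ0 x : J x -> J (x - 0). Proof. by rewrite subr0. Qed.
Lemma eJrefl x : J (x - x). Proof. by rewrite subrr; apply: li0 (jac_li R). Qed.
Lemma eJsym x y : J (x - y) -> J (y - x).
Proof. by move=> h; rewrite -opprB; apply: liN (jac_li R) h. Qed.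
Lemma eJtr x y z : J (x - y) -> J (y - z) -> J (x - z).
Proof.
move=> h1 h2; have -> : x - z = (x - y) + (y - z) by rewrite addrA subrK.
exact: liD (jac_li R) h1 h2.
Qed.
Lemma eJD x x' y y' : J (x - x') -> J (y - y') -> J ((x + y) - (x' + y')).
Proof. by move=> h1 h2; rewrite opprD addrACA; apply: liD (jac_li R) h1 h2. Qed.
Lemma eJB x x' y y' : J (x - x') -> J (y - y') -> J ((x - y) - (x' - y')).
Proof. by move=> h1 h2; apply: eJD h1 _; rewrite -opprD; apply: liN (jac_li R) h2. Qed.
Lemma eJMl z x x' : J (x - x') -> J (z * x - z * x').
Proof. by move=> h; rewrite -mulrBr; apply: liM (jac_li R) h. Qed.
Lemma eJMr z x x' : J (x - x') -> J (x * z - x' * z).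
Proof. by move=> h; rewrite -mulrBl; apply: jac_right. Qed.

Lemma reg (Hss : semisimple_ring_mod_jac R) x : exists a, J (x - x * a * x).
Proof.
pose L z := exists c s, J c /\ z = c + s * x.
have hL : left_ideal L := ideal_plus_principal x (jac_li R).
have JL : forall z, J z -> L z by move=> z Jz; exists z, 0; rewrite mul0r addr0.
have [L' [hL' JL' cov cap]] := Hss L hL JL.
have [l [l' [Ll L'l' E1]]] := cov 1.
have hy : forall y, L y -> J (y - y * l).
  move=> y Ly; apply: cap.
    exact: (liB hL Ly (liM _ hL Ll)).
  have -> : y - y * l = y * l' by rewrite -{1}[y]mulr1 E1 mulrDr addrAC subrr add0r.
  exact: liM hL' L'l'.
have [c [s [Jc El]]] := Ll.
exists s.
have Lx : L x by exists 0, 1; rewrite mul1r add0r; split => //; apply: li0 (jac_li R).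
have := hy x Lx; rewrite El mulrDr mulrA => h.
have -> : x - x * s * x = (x - (x * c + x * s * x)) + x * c.
  by rewrite opprD addrA addrAC subrK.
exact: (liD (jac_li R) h (liM _ (jac_li R) Jc)).
Qed.

Variable K : R -> Prop.
Hypotheses (K0 : K 0) (KB : forall x y, K x -> K y -> K (x - y))
  (KM : forall x r, K x -> K (x * r)) (JK : forall x, J x -> K x).

Lemma KD x y : K x -> K y -> K (x + y).
Proof.
move=> kx ky; have -> : x + y = x - (0 - y) by rewrite sub0r opprK.
exact: (KB kx (KB K0 ky)).
Qed.

Definition idem f := J (f * f - f).

Lemma ext (Hss : semisimple_ring_mod_jac R) f k : K f -> idem f -> K k ->
  exists f', [/\ K f', idem f', J (f' * f - f), J (f * f' - f) & J (k - f' * k)].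
Proof.
move=> Kf If Kk.
have [h Eh] : exists h, h = k - f * k by eexists.
have [a ha] := reg Hss h.
have [e Ee] : exists e, e = h * a by eexists.
have [e' Ee'] : exists e', e' = e - e * f by eexists.
exists (f + e').
have Kh : K h by rewrite Eh; apply: KB => //; apply: KM.
have Ke' : K e' by rewrite Ee' Ee; apply: KB; apply: KM => //; apply: KM.
have fh : J (f * h).
  have -> : f * h = - ((f * f - f) * k) by rewrite Eh mulrBr mulrA mulrBl opprB.
  by apply: (liN (jac_li R)); apply: jac_right.
have e'f : J (e' * f - 0).
  have -> : e' * f = - (e * (f * f - f)) by rewrite Ee' mulrBl mulrBr mulrA opprB.
  by rewrite subr0; apply: (liN (jac_li R)); apply: (liM _ (jac_li R) If).
have fe' : J (f * e' - 0).
  rewrite subr0 Ee' Ee mulrBr !mulrA.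
  by apply: (liB (jac_li R)); [apply: jac_right | do 2 apply: jac_right].
have ee : J (e * e - e).
  have -> : e * e - e = (h * a * h - h) * a by rewrite Ee mulrBl !mulrA.
  by apply: jac_right; apply: eJsym.
have e'e : J (e' * e - e).
  have -> : e' * e - e = (e * e - e) - e * ((f * h) * a).
    by rewrite Ee' mulrBl Ee !mulrA addrAC.
  by apply: (liB (jac_li R) ee); apply: (liM _ (jac_li R)); apply: jac_right.
have Ie' : idem e'.
  rewrite /idem.
  have -> : e' * e' - e' = (e' * e - e) - (e' * e - e) * f.
    rewrite [X in e' * X - _]Ee' mulrBr mulrA [X in _ - X]Ee' mulrBl.
    exact: zid1.
  by apply: (liB (jac_li R) e'e); apply: jac_right.
split.
- by apply: KD.
- rewrite /idem.
  have -> : (f + e') * (f + e') = (f * f + f * e') + (e' * f + e' * e').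
    by rewrite mulrDl !mulrDr.
  have -> : f + e' = (f + 0) + (0 + e') by rewrite addr0 add0r.
  apply: eJD; apply: eJD => //.
- have -> : (f + e') * f = f * f + e' * f by rewrite mulrDl.
  by rewrite -[X in _ - X]addr0; apply: eJD.
- have -> : f * (f + e') = f * f + f * e' by rewrite mulrDr.
  by rewrite -[X in _ - X]addr0; apply: eJD.
- have E1 : e' * k = h * a * h by rewrite Ee' mulrBl -(mulrA e f k) -mulrBr -Eh Ee.
  have -> : (f + e') * k = f * k + e' * k by rewrite mulrDl.
  apply: eJsym; rewrite E1.
  have Ek : k = f * k + h by rewrite Eh addrC subrK.
  rewrite [X in _ - X]Ek.
  apply: eJD; [exact: eJrefl | exact: eJsym].
Qed.

Lemma gen (Hss : semisimple_ring_mod_jac R) :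
  exists f, [/\ K f, idem f & forall k, K k -> J (k - f * k)].
Proof.
case: (pselect (exists f, [/\ K f, idem f & forall k, K k -> J (k - f * k)])) => // Hno.
exfalso.
pose spec f f' := [/\ K f', idem f', J (f' * f - f), J (f * f' - f) &
   exists k, [/\ K k, ~ J (k - f * k) & J (k - f' * k)]].
have step : forall f, K f -> idem f -> exists f', spec f f'.
  move=> f Kf If.
  have [k [Kk nk]] : exists k, K k /\ ~ J (k - f * k).
    apply: contrapT => nex; apply: Hno; exists f; split => // k Kk.
    by apply: contrapT => nk; apply: nex; exists k.
  have [f' [Kf' If' h1 h2 h3]] := ext Hss Kf If Kk.
  by exists f'; split => //; exists k.
have [g hg] : {g : R -> R & forall f, K f /\ idem f -> spec f (g f)}.
  apply: (@boolp.choice R R (fun f f' => K f /\ idem f -> spec f f')) => f.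
  case: (pselect (K f /\ idem f)) => [[Kf If]|nf]; last by exists 0.
  by have [f' H] := step f Kf If; exists f'.
pose fs n := iter n g 0.
have KI : forall n, K (fs n) /\ idem (fs n).
  elim => [|n [Kn In]].
    by split => //; rewrite /idem /fs /= mulr0 subrr; apply: (li0 (jac_li R)).
  by have [? ? ? ? ?] := hg _ (conj Kn In); split.
have sp : forall n, spec (fs n) (fs n.+1) := fun n => hg _ (KI n).
have mono1 : forall n z, J (z - z * fs n) -> J (z - z * fs n.+1).
  move=> n z hz; have [_ _ _ h2 _] := sp n.
  apply: eJsym.
  have a1 : J (z * fs n.+1 - z * fs n * fs n.+1) := eJMr _ hz.
  have a2 : J (z * fs n * fs n.+1 - z * fs n) by rewrite -mulrA; apply: eJMl.
  exact: eJtr a1 (eJtr a2 (eJsym hz)).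
have mono : forall n m z, (n <= m)%N -> J (z - z * fs n) -> J (z - z * fs m).
  move=> n m z /subnK <-; elim: (m - n)%N => [|p IH] hz; first by rewrite add0n.
  by rewrite addSn; apply: mono1; apply: IH.
pose U z := exists n, J (z - z * fs n).
have hU : left_ideal U.
  split.
  - by exists 0%N; rewrite mul0r subr0; apply: (li0 (jac_li R)).
  - move=> x y [n hx] [m hy]; exists (maxn n m); rewrite mulrBl; apply: eJB.
      exact: mono (leq_maxl n m) hx.
    exact: mono (leq_maxr n m) hy.
  - by move=> r x [n hx]; exists n; rewrite -mulrA; apply: eJMl.
have JU : forall z, J z -> U z by move=> z Jz; exists 0%N; rewrite /fs /= mulr0 subr0.
have [U' [hU' JU' cov cap]] := Hss U hU JU.
have [u [u' [Uu U'u' E1]]] := cov 1.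
have hy : forall y, U y -> J (y - y * u).
  move=> y Uy; apply: cap.
    exact: (liB hU Uy (liM _ hU Uu)).
  have -> : y - y * u = y * u' by rewrite -{1}[y]mulr1 E1 mulrDr addrAC subrr add0r.
  exact: liM hU' U'u'.
have [N hN] := Uu.
have [Kf1 If1] := KI N.+1.
have Uf1 : U (fs N.+1) by exists N.+1; apply: eJsym.
have b1 := hy _ Uf1.
have b2 : J (fs N.+1 * u - fs N.+1 * u * fs N) by rewrite -mulrA; apply: eJMl.
have b3 : J (fs N.+1 * u * fs N - fs N.+1 * fs N) := eJMr _ (eJsym b1).
have [_ _ h1 _ [k [Kk nk hk]]] := sp N.
have b4 : J (fs N.+1 - fs N) := eJtr b1 (eJtr b2 (eJtr b3 h1)).
apply: nk; apply: eJtr hk _; exact: eJMr _ b4.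
Qed.
End RightSS.

Lemma right_ss (R : pzRingType) : semisimple_ring_mod_jac R ->
  forall L : R^c -> Prop, left_ideal L -> (forall x : R^c, @jac R x -> L x) ->
     exists L' : R^c -> Prop, [/\ left_ideal L', (forall x : R^c, @jac R x -> L' x),
        (forall x, exists a b, [/\ L a, L' b & x = a + b]) &
        (forall x : R^c, L x -> L' x -> @jac R x)].
Proof.
move=> Hss L hL JL.
have K0 : L 0 := li0 hL.
have KB : forall x y : R, L x -> L y -> L (x - y) := fun x y => liB hL.
have KM : forall (x r : R), L x -> L (x * r) := fun x r Lx => @liM R^c L r x hL Lx.
have [f [Kf If gf]] := gen K0 KB KM Hss.
exists (fun z : R^c => @jac R (f * (z : R))); split.
- split.
  + by rewrite /= mulr0; apply: (li0 (jac_li R)).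
  + move=> x y Jx Jy /=; rewrite (_ : f * (x - y : R^c) = f * (x : R) - f * (y : R)).
      exact: (liB (jac_li R) Jx Jy).
    exact: mulrBr.
  + move=> r x Jx /=; rewrite (_ : f * (r * x : R^c) = (f * (x : R)) * (r : R)).
      exact: jac_right.
    by rewrite mulrA.
- by move=> x Jx /=; apply: (liM _ (jac_li R) Jx).
- move=> x; exists ((x : R^c) * (f : R^c)), (x - (x : R^c) * (f : R^c)); split.
  + exact: (@liM R^c L x f hL Kf).
  + change (jac ((f : R) * ((x : R) - (f : R) * (x : R)))).
    rewrite (_ : (f : R) * ((x : R) - (f : R) * (x : R)) = - ((f * f - f) * (x : R))).
      exact: (liN (jac_li R) (jac_right _ If)).
    by rewrite mulrBr mulrA mulrBl opprB.
  + by rewrite addrC subrK.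
- move=> x Lx Jfx; have := gf x Lx => h.
  have -> : (x : R) = ((x : R) - f * (x : R)) + f * (x : R) by rewrite subrK.
  exact: (liD (jac_li R) h Jfx).
Qed.
Section Main.
Variable R : pzRingType.
Variable d : nat.
Hypothesis h0 : forall x : R, jpow d x -> x = 0.
Hypothesis Hss : semisimple_ring_mod_jac R.
Local Notation P := (@jpow R).

Lemma unitL (j : R) : jac j -> forall r : R, exists u, u * (1 - r * j) = 1.
Proof.
move=> Jj r; have Jrj : jac (r * j) := liM r (jac_li R) Jj.
exact: (nil_unit (h0 (jpow_exp d Jrj))).1.
Qed.

Lemma unitR (j : R) : jac j -> forall r : R^c, exists u : R^c, u * (1 - r * (j : R^c)) = 1.
Proof.
move=> Jj r; have Jjr : jac (@GRing.mul R j r) := jac_right _ Jj.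
have [u hu] := (nil_unit (h0 (jpow_exp d Jjr))).2.
by exists u.
Qed.

Lemma boundL n (M : nat -> R -> Prop) : semisimple_filtration n M ->
  forall k i y x, (i + k <= n)%N -> P k y -> M (i + k)%N x -> M i (y * x).
Proof.
move=> [hli hM0 hMn hinc hss]; elim => [|k IH] i y x hik Py Mx.
  by rewrite addn0 in Mx; apply: (liM y (hli i _) Mx); rewrite addn0 in hik.
case: Py => [m [a [b [Ja Pb ->]]]]; rewrite mulr_suml.
apply: (li_sum (hli i _)); first by lia.
move=> t; rewrite -mulrA.
have hb : M i.+1 (b t * x).
  apply: IH; [by rewrite addSn -addnS | exact: Pb | by rewrite addSn -addnS].
have hin : (i < n)%N by lia.
exact: (ssf_kill (hli i (ltnW hin)) (hli i.+1 hin) (fun z => hinc i z hin) (hss i hin) (unitL (Ja t)) hb).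
Qed.

Lemma boundR n (M : nat -> R^c -> Prop) : @semisimple_filtration R^c n M ->
  forall k i y x, (i + k <= n)%N -> P k y -> M (i + k)%N x -> M i ((x : R) * y).
Proof.
move=> [hli hM0 hMn hinc hss]; elim => [|k IH] i y x hik Py Mx.
  rewrite addn0 in Mx hik; exact: (@liM R^c _ y x (hli i hik) Mx).
case: Py => [m [a [b [Ja Pb ->]]]]; rewrite mulr_sumr.
have hMi : left_ideal (M i) by apply: hli; lia.
apply: (big_ind (M i)).
- exact: (li0 hMi).
- by move=> u v Mu Mv; exact: (@liD R^c _ _ _ hMi Mu Mv).
move=> t _; rewrite mulrA.
have hin : (i + k < n)%N by lia.
have hxa : M (i + k)%N ((x : R) * a t).
  have := @ssf_kill R^c (M (i + k)%N) (M (i + k).+1) (a t) (hli _ (ltnW hin)) (hli _ hin)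
     (fun z => hinc _ z hin) (hss _ hin) (unitR (Ja t)) x.
  by apply; rewrite -addnS.
by apply: IH; [lia | exact: Pb | exact: hxa].
Qed.

Lemma radL : semisimple_filtration d (fun i => P (d - i)%N).
Proof.
split.
- by move=> i _; apply: jpow_li.
- move=> x; rewrite subn0; split; first exact: h0.
  by move=> ->; apply: (li0 (jpow_li _ _)).
- by move=> x; rewrite subnn.
- move=> i x hi; have -> : (d - i = (d - i.+1).+1)%N by lia.
  exact: jpow_mono.
- move=> i hi; apply: (ssf_make (Jp := @jac R)) => //; try by apply: jpow_li.
  + move=> x; have -> : (d - i = (d - i.+1).+1)%N by lia.
    exact: jpow_mono.
  + move=> a x Ja Px; have -> : (d - i = (d - i.+1).+1)%N by lia.
    exact: jpow_single.
Qed.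

Lemma jpow_lic k : @left_ideal R^c (P k).
Proof.
split.
- exact: (li0 (jpow_li R k)).
- by move=> x y; apply: (liB (jpow_li R k)).
- by move=> r x Px; apply: (jpow_right _ Px).
Qed.

Lemma radR : @semisimple_filtration R^c d (fun i => P (d - i)%N).
Proof.
split.
- by move=> i _; apply: jpow_lic.
- move=> x; rewrite subn0; split; first exact: h0.
  by move=> ->; apply: (li0 (jpow_li _ _)).
- by move=> x; rewrite subnn.
- move=> i x hi; have -> : (d - i = (d - i.+1).+1)%N by lia.
  exact: jpow_mono.
- move=> i hi; apply: (@ssf_make R^c (@jac R)); try by apply: jpow_lic.
  + exact: right_ss.
  + move=> x; have -> : (d - i = (d - i.+1).+1)%N by lia.
    exact: jpow_mono.
  + move=> a x Ja Px; have -> : (d - i = (d - i.+1).+1)%N by lia.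
    exact: (jpow_rrec Px Ja).
Qed.

Definition socL (i : nat) (x : R) := forall y, P i y -> y * x = 0.
Definition socR (i : nat) (x : R) := forall y, P i y -> x * y = 0.

Lemma socLf : semisimple_filtration d socL.
Proof.
have hli : forall i, left_ideal (socL i).
  move=> i; split.
  - by move=> y _; rewrite mulr0.
  - by move=> x z hx hz y Py; rewrite mulrBr hx // hz // subrr.
  - by move=> r x hx y Py; rewrite mulrA; apply: hx; apply: jpow_right.
split.
- by move=> i _.
- move=> x; split; first by move=> /(_ 1 I); rewrite mul1r.
  by move=> -> y _; rewrite mulr0.
- by move=> x y /h0 ->; rewrite mul0r.
- by move=> i x _ hx y Py; apply: hx; apply: jpow_mono.
- move=> i hi; apply: (ssf_make (Jp := @jac R)) => //.
  + by move=> x hx y Py; apply: hx; apply: jpow_mono.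
  + by move=> a x Ja hx y Py; rewrite mulrA; apply: hx; apply: jpow_rrec.
Qed.

Lemma socRf : @semisimple_filtration R^c d socR.
Proof.
have hli : forall i, @left_ideal R^c (socR i).
  move=> i; split.
  - by move=> y _; rewrite /= mul0r.
  - move=> x z hx hz y Py; change (((x : R) - (z : R)) * y = 0).
    by rewrite mulrBl hx // hz // subrr.
  - move=> r x hx y Py; change (((x : R) * (r : R)) * y = 0).
    by rewrite -mulrA; apply: hx; apply: (liM _ (jpow_li R i) Py).
split.
- by move=> i _.
- move=> x; split; first by move=> /(_ 1 I); rewrite mulr1.
  by move=> -> y _; rewrite /= mul0r.
- by move=> x y /h0 ->; rewrite mulr0.
- by move=> i x _ hx y Py; apply: hx; apply: jpow_mono.
- move=> i hi; apply: (@ssf_make R^c (@jac R)) => //.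
  + exact: right_ss.
  + by move=> x hx y Py; apply: hx; apply: jpow_mono.
  + move=> a x Ja hx y Py; change (((x : R) * (a : R)) * y = 0).
    by rewrite -mulrA; apply: hx; apply: jpow_single.
Qed.


Hypothesis hmin : forall k, (forall x : R, jpow k x -> x = 0) -> (d <= k)%N.

Lemma lenL n (M : nat -> R -> Prop) : semisimple_filtration n M -> (d <= n)%N.
Proof.
move=> hf; apply: hmin => x Px; case: (hf) => _ hM0 hMn _ _.
have := @boundL n M hf n 0 x 1 (leqnn _) Px; rewrite add0n mulr1; move/(_ (hMn 1)).
by move/hM0.
Qed.

Lemma lenR n (M : nat -> R^c -> Prop) : @semisimple_filtration R^c n M -> (d <= n)%N.
Proof.
move=> hf; apply: hmin => x Px; case: (hf) => _ hM0 hMn _ _.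
have := @boundR n M hf n 0 x 1 (leqnn _) Px; rewrite add0n mul1r; move/(_ (hMn 1)).
by move/hM0.
Qed.

Lemma loewyL n (M : nat -> R -> Prop) : loewy_filtration n M -> n = d.
Proof. by move=> [hf hm]; apply/eqP; rewrite eqn_leq (hm _ _ radL) (lenL hf). Qed.
Lemma loewyR n (M : nat -> R^c -> Prop) : @loewy_filtration R^c n M -> n = d.
Proof. by move=> [hf hm]; apply/eqP; rewrite eqn_leq (hm _ _ radR) (lenR hf). Qed.

Lemma lowL (M : nat -> R -> Prop) i y : semisimple_filtration d M -> (i <= d)%N -> P (d - i)%N y -> M i y.
Proof.
move=> hf hi Py; case: (hf) => _ _ hMn _ _.
have := @boundL d M hf (d - i)%N i y 1 _ Py; rewrite subnKC // mulr1; apply; last exact: hMn.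
exact: leqnn.
Qed.
Lemma lowR (M : nat -> R^c -> Prop) i y : @semisimple_filtration R^c d M -> (i <= d)%N ->
  P (d - i)%N y -> M i y.
Proof.
move=> hf hi Py; case: (hf) => _ _ hMn _ _.
have := @boundR d M hf (d - i)%N i y 1 _ Py; rewrite subnKC // mul1r; apply; last exact: hMn.
exact: leqnn.
Qed.
Lemma upL (M : nat -> R -> Prop) i x : semisimple_filtration d M -> (i <= d)%N -> M i x -> socL i x.
Proof.
move=> hf hi Mx y Py; case: (hf) => _ hM0 _ _ _; apply/hM0.
by apply: (@boundL d M hf i 0 y x); rewrite ?add0n.
Qed.
Lemma upR (M : nat -> R^c -> Prop) i x : @semisimple_filtration R^c d M -> (i <= d)%N ->
  M i x -> socR i x.
Proof.
move=> hf hi Mx y Py; case: (hf) => _ hM0 _ _ _; apply/hM0.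
by apply: (@boundR d M hf i 0 y x); rewrite ?add0n.
Qed.

End Main.

Lemma reform (R : pzRingType) d a b (x : R) : (a <= d)%N -> (b <= d)%N ->
  (dual_sys d (@jsys R d) a.+1 b.+1 x <-> forall y, jpow a y -> jpow b (x * y)) /\
  (jsys_op d a.+1 b.+1 x <-> forall y, jpow (d - b) y -> jpow (d - a) (y * x)).
Proof.
move=> ha hb; rewrite /dual_sys /jsys /jsys_op.
have e1 : (d.+1 - (d.+2 - a.+1) = a)%N by lia.
have e2 : (d.+1 - (d.+2 - b.+1) = b)%N by lia.
have e3 : (d.+1 - b.+1 = d - b)%N by lia.
have e4 : (d.+1 - a.+1 = d - a)%N by lia.
by rewrite e1 e2 e3 e4.
Qed.

Theorem proposition2p9 (R : pzRingType) (d : nat) :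
  semiprimary R -> loewy_length R d ->
  (rigid_ring R <->
   forall i j : nat, (1 <= i <= d.+1)%N -> (1 <= j <= d.+1)%N ->
     forall x : R, dual_sys d (@jsys R d) i j x <-> jsys_op d i j x).
Proof.
move=> [_ Hss] [h0 hmin].
have PD0 : jpow d (0 : R) by apply: (li0 (jpow_li R d)).
split.
- move=> [[_ uL] [_ uR]].
  have radLo : loewy_filtration d (fun i => @jpow R (d - i)) :=
    conj (radL h0 Hss) (fun m M' hf => lenL h0 hmin hf).
  have socLo : loewy_filtration d (@socL R) :=
    conj (socLf h0 Hss) (fun m M' hf => lenL h0 hmin hf).
  have radRo : @loewy_filtration R^c d (fun i => @jpow R (d - i)) :=
    conj (radR h0 Hss) (fun m M' hf => lenR h0 hmin hf).
  have socRo : @loewy_filtration R^c d (@socR R) :=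
    conj (socRf h0 Hss) (fun m M' hf => lenR h0 hmin hf).
  have [_ charL] := uL _ _ _ _ radLo socLo.
  have [_ charR] := uR _ _ _ _ radRo socRo.
  move=> i j /andP[i1 i2] /andP[j1 j2] x.
  case: i i1 i2 => [//|a] _ ha; case: j j1 j2 => [//|b] _ hb.
  rewrite ltnS in ha; rewrite ltnS in hb.
  have [-> ->] := reform x ha hb.
  split.
  + move=> H y Py; apply/(charR a ha) => z Pz.
    change ((y * x) * z = 0); rewrite -mulrA; apply: h0.
    by have := jpow_mul Py (H z Pz); rewrite subnK.
  + move=> H y Py.
    have hdb : (d - b <= d)%N by lia.
    have := proj2 (charL _ hdb (x * y)); rewrite subKn //; apply => z Pz.
    rewrite mulrA; apply: h0.
    by have := jpow_mul (H z Pz) Py; rewrite subnK.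
- move=> C.
  have c2 : forall i, (i <= d)%N -> forall x : R, @socL R i x -> jpow (d - i) x.
    move=> i hi x hx.
    have hdi : (d - i <= d)%N by lia.
    have [E1 E2] := reform x (leq0n d) hdi.
    have hj : (0 < (d - i).+1 <= d.+1)%N by rewrite /= ltnS hdi.
    have [_ h] := C 1%N (d - i).+1 isT hj x.
    have RH : forall y : R, jpow (d - (d - i)) y -> jpow (d - 0) (y * x).
      by move=> y Py; rewrite subKn // in Py; rewrite subn0 (hx y Py).
    have HL := h ((proj2 E2) RH).
    by have := (proj1 E1 HL) 1 I; rewrite mulr1.
  have c1 : forall i, (i <= d)%N -> forall x : R, @socR R i x -> jpow (d - i) x.
    move=> i hi x hx.
    have [E1 E2] := reform x hi (leqnn d).
    have hi' : (0 < i.+1 <= d.+1)%N by rewrite /= ltnS hi.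
    have hd' : (0 < d.+1 <= d.+1)%N by rewrite /= leqnn.
    have [h _] := C i.+1 d.+1 hi' hd' x.
    have LH : forall y : R, jpow i y -> jpow d (x * y).
      by move=> y Py; rewrite (hx y Py).
    have HR := h ((proj2 E1) LH).
    by have := (proj1 E2 HR) 1; rewrite mul1r; apply; rewrite subnn.
  split.
  + split.
    * by exists d, (fun i => @jpow R (d - i)); exact: (conj (radL h0 Hss) (fun m M' hf => lenL h0 hmin hf)).
    * move=> n M n' M' hM hM'.
      have En := loewyL h0 Hss hmin hM; have En' := loewyL h0 Hss hmin hM'.
      subst n n'; split => // i hi x.
      have ch : forall M0, loewy_filtration d M0 -> (M0 i x <-> jpow (d - i) x).
        move=> M0 [hf _]; split => [Mx|Px].
          exact: (c2 i hi x (upL h0 hf hi Mx)).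
        exact: (lowL h0 hf hi Px).
      exact: (iff_trans (ch _ hM) (iff_sym (ch _ hM'))).
  + split.
    * by exists d, (fun i => @jpow R (d - i)); exact: (conj (radR h0 Hss) (fun m M' hf => lenR h0 hmin hf)).
    * move=> n M n' M' hM hM'.
      have En := loewyR h0 Hss hmin hM; have En' := loewyR h0 Hss hmin hM'.
      subst n n'; split => // i hi x.
      have ch : forall M0 : nat -> R^c -> Prop, @loewy_filtration R^c d M0 -> (M0 i x <-> @jpow R (d - i) x).
        move=> M0 [hf _]; split => [Mx|Px].
          exact: (c1 i hi x (upR h0 hf hi Mx)).
        exact: (lowR h0 hf hi Px).
      exact: (iff_trans (ch _ hM) (iff_sym (ch _ hM'))).
Qed.
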